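(* Let $d\ge2$, suppose $\mathcal D\subseteq\mathbb S_1^{d-1}$ has non-empty interior and $\mathcal C\subset\Gamma\backslash G\times(0,1)$ is compact. Then: (i) there exists $\kappa(\mathcal C)>0$ such that $F_{\mathcal D}(M,t)<\kappa(\mathcal C)$ whenever $(\Gamma M,t)\in\mathcal C$; and (ii) $F_{\mathcal D}$ is continuous at every point $(\Gamma M,t)\in\mathcal C$ satisfying $$(\mathbb Z^{d+1}M\setminus\{0\})\cap\partial\big((-t,1-t)\times(0,\kappa(\mathcal C)]\mathcal D\big)=\emptyset.$$
   Context: $G=\mathrm{SL}(d+1,\mathbb R)$, $\Gamma=\mathrm{SL}(d+1,\mathbb Z)$, $\Gamma\backslash G$ with the quotient topology. Row vectors in $\mathbb R^{d+1}$ are written $(u,\vec v)$, $u\in\mathbb R$, $\vec v\in\mathbb R^d$; $\mathbb Z^{d+1}M=\{\vec mM:\vec m\in\mathbb Z^{d+1}\}$. For $t\in(0,1)$, $\mathcal Q_{\mathcal D}(M,t)=\{(u,\vec v)\in\mathbb Z^{d+1}M:-t<u<1-t,\ \vec v\in\mathbb R_{>0}\mathcal D\}$ and $F_{\mathcal D}(M,t)=\min\{|\vec v|:(u,\vec v)\in\mathcal Q_{\mathcal D}(M,t)\}$; this is a well-defined positive function on $\Gamma\backslash G\times(0,1)$. For $r>0$, $(0,r]\mathcal D=\{s\vec x: 0<s\le r,\ \vec x\in\mathcal D\}$; $\partial$ denotes topological boundary in $\mathbb R^{d+1}$. *)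

(* Defs.v *)
From HB Require Import structures.
From mathcomp Require Import all_boot all_order all_algebra.
From mathcomp Require Import all_classical all_reals all_analysis.
Set Implicit Arguments. Unset Strict Implicit. Unset Printing Implicit Defensive.
Import Order.TTheory GRing.Theory Num.Theory.
Import numFieldNormedType.Exports.
Local Open Scope classical_set_scope.
Local Open Scope ring_scope.

Section Defs.
Variable R : realType.
Variable d : nat.

Definition enorm (n : nat) (v : 'rV[R]_n) : R :=
  Num.sqrt (\sum_(j < n) (v 0 j) ^+ 2).

Definition sphere : set 'rV[R]_d := [set v | enorm v = 1].

Definition nonempty_sphere_interior (D : set 'rV[R]_d) : Prop :=
  exists v, D v /\ exists2 e : R, 0 < e &
    forall w, sphere w -> enorm (w - v) < e -> D w.

Definition SL : set 'M[R]_(d.+1) := [set M | \det M = 1].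

Definition intvec : set 'rV[R]_(d.+1) := [set m | forall j, m 0 j \is a Num.int].

Definition Gamma : set 'M[R]_(d.+1) :=
  [set g | \det g = 1 /\ forall i j, g i j \is a Num.int].

Definition lattice (M : 'M[R]_(d.+1)) : set 'rV[R]_(d.+1) :=
  [set m *m M | m in intvec].

Definition ucomp (x : 'rV[R]_(d.+1)) : R := x 0 ord0.
Definition vcomp (x : 'rV[R]_(d.+1)) : 'rV[R]_d := \row_(j < d) x 0 (lift ord0 j).

Definition cone (D : set 'rV[R]_d) : set 'rV[R]_d :=
  [set v | exists s : R, 0 < s /\ exists2 x, D x & v = s *: x].

Definition trunc_cone (r : R) (D : set 'rV[R]_d) : set 'rV[R]_d :=
  [set v | exists s : R, (0 < s /\ s <= r) /\ exists2 x, D x & v = s *: x].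

Definition QD (D : set 'rV[R]_d) (M : 'M[R]_(d.+1)) (t : R) : set 'rV[R]_(d.+1) :=
  [set x | lattice M x /\ - t < ucomp x < 1 - t /\ cone D (vcomp x)].

(* F_D(M,t) = min { |v| : (u,v) in Q_D(M,t) } (taken as the infimum) *)
Definition FD (D : set 'rV[R]_d) (p : 'M[R]_(d.+1) * R) : R :=
  inf [set enorm (vcomp x) | x in QD D p.1 p.2].

Definition slab (r t : R) (D : set 'rV[R]_d) : set 'rV[R]_(d.+1) :=
  [set x | - t < ucomp x < 1 - t /\ trunc_cone r D (vcomp x)].

Definition boundary (A : set 'rV[R]_(d.+1)) : set 'rV[R]_(d.+1) :=
  closure A `\` interior A.

Definition X : set ('M[R]_(d.+1) * R) := [set p | SL p.1 /\ 0 < p.2 < 1].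

(* Gamma-invariant subsets of G x (0,1): subsets of Gamma\G x (0,1) *)
Definition Ginv (U : set ('M[R]_(d.+1) * R)) : Prop :=
  U `<=` X /\ forall g M t, Gamma g -> U (M, t) -> U (g *m M, t).

(* open sets of Gamma\G x (0,1) (quotient topology x usual topology),
   represented by their (saturated) preimages in G x (0,1) *)
Definition qopen (U : set ('M[R]_(d.+1) * R)) : Prop :=
  Ginv U /\ exists O : set ('M[R]_(d.+1) * R), open O /\ U = O `&` X.

Definition qcompact (C : set ('M[R]_(d.+1) * R)) : Prop :=
  Ginv C /\ forall (I : Type) (U : I -> set ('M[R]_(d.+1) * R)),
    (forall i, qopen (U i)) -> C `<=` \bigcup_i U i ->
    exists (n : nat) (f : 'I_n -> I), C `<=` \bigcup_k U (f k).

Definition qcontinuous_at (f : 'M[R]_(d.+1) * R -> R) (p : 'M[R]_(d.+1) * R) : Prop :=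
  forall e : R, 0 < e -> exists U, qopen U /\ U p /\ forall q, U q -> `|f q - f p| < e.

End Defs.

(* Main.v *)
Require Import Defs.
Set Warnings "-notation-overridden,-ambiguous-paths,-notation-incompatible-prefix,-deprecated".
From HB Require Import structures.
From mathcomp Require Import all_boot all_order all_algebra.
From mathcomp Require Import all_classical all_reals all_analysis.
From mathcomp Require Import ring lra zify.
Set Implicit Arguments. Unset Strict Implicit. Unset Printing Implicit Defensive.
Import Order.TTheory GRing.Theory Num.Theory.
Import numFieldNormedType.Exports.
Local Open Scope classical_set_scope.
Local Open Scope ring_scope.

Section W1.
Variable R : realType.
Implicit Types (k : nat).

Definition s1 k (v : 'rV[R]_k) : R := \sum_(j < k) `|v 0 j|.

Lemma s1_ge0 k (v : 'rV[R]_k) : 0 <= s1 v.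
Proof. by apply: sumr_ge0 => j _. Qed.

Lemma enorm_ge0 k (v : 'rV[R]_k) : 0 <= enorm v.
Proof. exact: sqrtr_ge0. Qed.

Lemma sumsq_ge0 k (v : 'rV[R]_k) : 0 <= \sum_(j < k) (v 0 j) ^+ 2.
Proof. by apply: sumr_ge0 => j _; exact: sqr_ge0. Qed.

Lemma enorm_sq k (v : 'rV[R]_k) : enorm v ^+ 2 = \sum_(j < k) (v 0 j) ^+ 2.
Proof. by rewrite /enorm sqr_sqrtr // sumsq_ge0. Qed.

Lemma enormZ k (a : R) (v : 'rV[R]_k) : enorm (a *: v) = `|a| * enorm v.
Proof.
rewrite /enorm (eq_bigr (fun j => a ^+ 2 * (v 0 j) ^+ 2)); last first.
  by move=> j _; rewrite mxE exprMn.
by rewrite -mulr_sumr sqrtrM ?sqr_ge0 // sqrtr_sqr.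
Qed.

Lemma enormN k (v : 'rV[R]_k) : enorm (- v) = enorm v.
Proof. by rewrite -scaleN1r enormZ normrN normr1 mul1r. Qed.

Lemma coord_le_enorm k (v : 'rV[R]_k) j : `|v 0 j| <= enorm v.
Proof.
rewrite -sqrtr_sqr /enorm ler_sqrt ?sumsq_ge0 //.
rewrite (bigD1 j) //= lerDl; apply: sumr_ge0 => i _; exact: sqr_ge0.
Qed.

Lemma enorm_le_s1 k (v : 'rV[R]_k) : enorm v <= s1 v.
Proof.
rewrite /enorm -(ger0_norm (s1_ge0 v)) -sqrtr_sqr ler_sqrt ?sqr_ge0 //.
rewrite /s1.
pose K (A B : R) := (0 <= B) /\ A <= B ^+ 2.
suff : K (\sum_(j < k) v 0 j ^+ 2) (\sum_(j < k) `|v 0 j|) by case.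
apply: (big_ind2 K).
- by split => //; rewrite expr0n.
- move=> x1 x2 y1 y2 [h1 h2] [h3 h4]; split; first exact: addr_ge0.
  rewrite sqrrD; nra.
- by move=> j _; split => //; rewrite real_normK // num_real.
Qed.

Lemma cauchy_schwarz k (v w : 'rV[R]_k) :
  \sum_(j < k) v 0 j * w 0 j <= enorm v * enorm w.
Proof.
set a := \sum_(j < k) v 0 j ^+ 2.
set b := \sum_(j < k) w 0 j ^+ 2.
set c := \sum_(j < k) v 0 j * w 0 j.
have a0 : 0 <= a by exact: sumsq_ge0.
have b0 : 0 <= b by exact: sumsq_ge0.
have key : forall l : R, 0 <= a - 2 * l * c + l ^+ 2 * b.
  move=> l.
  have -> : a - 2 * l * c + l ^+ 2 * b = \sum_(j < k) (v 0 j - l * w 0 j) ^+ 2.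
    rewrite /a /b /c mulr_sumr mulr_sumr -sumrN -!big_split /=.
    by apply: eq_bigr => j _; ring.
  by apply: sumr_ge0 => j _; exact: sqr_ge0.
have c2 : c ^+ 2 <= a * b.
  have [b00|bn0] := eqVneq b 0.
    have w0 : forall j, w 0 j = 0.
      move=> j; apply/eqP; rewrite -sqrf_eq0; apply/eqP.
      by apply: (psumr_eq0P (P := predT) (F := fun j => w 0 j ^+ 2)) => // i _; exact: sqr_ge0.
    have -> : c = 0 by rewrite /c big1 // => j _; rewrite w0 mulr0.
    by rewrite expr0n /= mulr_ge0.
  have bp : 0 < b by rewrite lt_def bn0 b0.
  have := key (c / b).
  have -> : a - 2 * (c / b) * c + (c / b) ^+ 2 * b = (a * b - c ^+ 2) / b.
    by field.
  move=> h; rewrite -subr_ge0.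
  have -> : a * b - c ^+ 2 = ((a * b - c ^+ 2) / b) * b by field.
  exact: mulr_ge0 h (ltW bp).
have : c <= `|c| := ler_norm c.
move/le_trans; apply.
rewrite -sqrtr_sqr /enorm -/a -/b -sqrtrM // ler_sqrt //; exact: mulr_ge0.
Qed.

Lemma enormD k (v w : 'rV[R]_k) : enorm (v + w) <= enorm v + enorm w.
Proof.
have h := addr_ge0 (enorm_ge0 v) (enorm_ge0 w).
rewrite [X in X <= _]/enorm -[X in _ <= X](ger0_norm h) -sqrtr_sqr ler_sqrt ?sqr_ge0 //.
have -> : \sum_(j < k) (v + w) 0 j ^+ 2 =
   \sum_(j < k) v 0 j ^+ 2 + 2 * \sum_(j < k) v 0 j * w 0 j + \sum_(j < k) w 0 j ^+ 2.
  rewrite mulr_sumr -!big_split /=; apply: eq_bigr => j _; rewrite !mxE; ring.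
rewrite sqrrD -!enorm_sq.
have := cauchy_schwarz v w.
move: (\sum_(j < k) v 0 j * w 0 j) (enorm v) (enorm w) => x y z; nra.
Qed.

Lemma enormB k (v w : 'rV[R]_k) : enorm (v - w) <= enorm v + enorm w.
Proof. by rewrite -(enormN w); exact: enormD. Qed.

Lemma enorm_sub_sym k (v w : 'rV[R]_k) : enorm (v - w) = enorm (w - v).
Proof. by rewrite -enormN opprB. Qed.

End W1.

Section W2.
Variable R : realType.
Variable d : nat.
Variable D : set 'rV[R]_d.

Lemma cone_dec (HD : D `<=` @sphere R d) v : cone D v ->
  v != 0 /\ exists2 w, D w & v = enorm v *: w.
Proof.
case=> s [s0 [w Dw ->]].
have ew : enorm w = 1 := HD _ Dw.
rewrite enormZ ew mulr1 gtr0_norm //; split; last by exists w.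
apply/eqP => h.
have := congr1 (@enorm R d) h; rewrite enormZ ew mulr1 gtr0_norm //.
have -> : enorm (0 : 'rV[R]_d) = 0.
  by rewrite -(scale0r (0 : 'rV[R]_d)) enormZ normr0 mul0r.
by move=> s00; move: s0; rewrite s00 ltxx.
Qed.

Lemma cone_trunc (HD : D `<=` @sphere R d) r v : cone D v -> enorm v <= r -> trunc_cone r D v.
Proof.
case=> s [s0 [w Dw ->]].
have ew : enorm w = 1 := HD _ Dw.
rewrite enormZ ew mulr1 gtr0_norm // => sr.
by exists s; split => //; exists w.
Qed.

Lemma trunc_cone_cone r v : trunc_cone r D v -> cone D v.
Proof. by case=> s [[s0 _] h]; exists s. Qed.

Lemma enorm0 k : enorm (0 : 'rV[R]_k) = 0.
Proof. by rewrite -(scale0r (0 : 'rV[R]_k)) enormZ normr0 mul0r. Qed.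

Lemma direction (v0 : 'rV[R]_d) (e0 : R) :
  enorm v0 = 1 -> 0 < e0 ->
  (forall w, sphere w -> enorm (w - v0) < e0 -> D w) ->
  forall (l : R) v, 0 < l -> enorm (v - l *: v0) < l * (Num.min e0 1 / 2) -> cone D v.
Proof.
move=> ev0 e00 HD l v l0 hv.
set c := Num.min e0 1 / 2 in hv.
have c0 : 0 < c by rewrite divr_gt0 // lt_min e00 ltr01.
have c1 : c <= 1 / 2 by rewrite ler_pM2r // ge_min lexx orbT.
have ce : 2 * c <= e0.
  by rewrite /c mulrC -mulrA mulVf ?pnatr_eq0 // mulr1 ge_min lexx.
set E := enorm (v - l *: v0) in hv.
have el : enorm (l *: v0) = l by rewrite enormZ ev0 mulr1 gtr0_norm.
have h1 : enorm v <= E + l.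
  have := enormD (v - l *: v0) (l *: v0); rewrite subrK el //.
have h2 : l <= E + enorm v.
  have := enormD (l *: v0 - v) v; rewrite subrK el enorm_sub_sym //.
set nv := enorm v in h1 h2.
have nvp : 0 < nv by nra.
have nv0 : nv != 0 by rewrite gt_eqF.
have l00 : l != 0 by rewrite gt_eqF.
exists nv; split => //; exists (nv^-1 *: v); last first.
  by rewrite scalerA mulfV // scale1r.
apply: HD.
  by rewrite /sphere /= enormZ gtr0_norm ?invr_gt0 // mulVf.
have -> : nv^-1 *: v - v0 = l^-1 *: (v - l *: v0) + (nv^-1 - l^-1) *: v.
  apply/matrixP => i j; rewrite !mxE; field; exact/andP.
apply: le_lt_trans (enormD _ _) _.
rewrite !enormZ -/E -/nv gtr0_norm ?invr_gt0 //.
have -> : `|nv^-1 - l^-1| * nv = `|l - nv| / l.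
  have -> : nv^-1 - l^-1 = (l - nv) / (nv * l) by field; exact/andP.
  rewrite normrM normfV (gtr0_norm (mulr_gt0 nvp l0)); field; exact/andP.
have h3 : `|l - nv| <= E by rewrite ler_norml; apply/andP; split; lra.
have h4 : l^-1 * E < c by rewrite ltr_pdivrMl.
have h5 : `|l - nv| / l < c by rewrite ltr_pdivrMr //; lra.
lra.
Qed.

End W2.

Section W3.
Variable R : realType.
Variable d : nat.

Definition intmx m n (A : 'M[R]_(m, n)) := forall i j, A i j \is a Num.int.

Lemma det_int n (A : 'M[R]_n) : intmx A -> \det A \is a Num.int.
Proof.
move=> hA; rewrite /determinant; apply: rpred_sum => s _.
apply: rpredM; first by apply: rpredX; exact: rpredN1.
by apply: rpred_prod => i _; exact: hA.
Qed.

Lemma adj_int n (A : 'M[R]_n) : intmx A -> intmx (\adj A).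
Proof.
move=> hA i j; rewrite mxE /cofactor; apply: rpredM.
  by apply: rpredX; exact: rpredN1.
by apply: det_int => k l; rewrite !mxE.
Qed.

Lemma mul_int m n p (A : 'M[R]_(m, n)) (B : 'M[R]_(n, p)) :
  intmx A -> intmx B -> intmx (A *m B).
Proof.
move=> hA hB i j; rewrite mxE; apply: rpred_sum => k _; exact: rpredM.
Qed.

Lemma Gamma_int (g : 'M[R]_d.+1) : Gamma g -> intmx g.
Proof. by case. Qed.

Lemma Gamma_inv (g : 'M[R]_d.+1) : Gamma g ->
  [/\ Gamma (invmx g), g *m invmx g = 1%:M & invmx g *m g = 1%:M].
Proof.
case=> dg ig.
have u : g \in unitmx by rewrite unitmxE dg unitr1.
have e : invmx g = \adj g by rewrite /invmx u dg invr1 scale1r.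
split; [|exact: mulmxV|exact: mulVmx].
split; last by rewrite e; exact: adj_int.
have := det_inv g; rewrite dg invr1 => ->; done.
Qed.

Lemma Gamma_mul (g h : 'M[R]_d.+1) : Gamma g -> Gamma h -> Gamma (g *m h).
Proof.
case=> dg ig [dh ih]; split; first by rewrite det_mulmx dg dh mulr1.
exact: mul_int.
Qed.

Lemma Gamma1 : Gamma (1%:M : 'M[R]_d.+1).
Proof.
split; first by rewrite det1.
by move=> i j; rewrite mxE; case: (i == j) => /=; rewrite ?rpred0 ?rpred1.
Qed.

Lemma intvec_mul (m : 'rV[R]_d.+1) (g : 'M[R]_d.+1) :
  intvec m -> intmx g -> intvec (m *m g).
Proof.
move=> hm hg j; rewrite mxE; apply: rpred_sum => k _; apply: rpredM => //.
Qed.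

Lemma lattice_sub (g M : 'M[R]_d.+1) : intmx g -> lattice (g *m M) `<=` lattice M.
Proof.
move=> hg x [m hm <-]; exists (m *m g); first exact: intvec_mul.
by rewrite mulmxA.
Qed.

Lemma lattice_Gamma (g M : 'M[R]_d.+1) : Gamma g -> lattice (g *m M) = lattice M.
Proof.
move=> Gg; apply/seteqP; split; first by apply: lattice_sub; case: Gg.
have [Gi _ e] := Gamma_inv Gg.
have -> : lattice M = lattice (invmx g *m (g *m M)) by rewrite mulmxA e mul1mx.
by apply: lattice_sub; case: Gi.
Qed.

Lemma FD_Gamma (D : set 'rV[R]_d) (g M : 'M[R]_d.+1) t : Gamma g ->
  FD D (g *m M, t) = FD D (M, t).
Proof.
move=> Gg; rewrite /FD /QD /= lattice_Gamma //.
Qed.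

Lemma X_Gamma (g M : 'M[R]_d.+1) t : Gamma g -> X (M, t) -> X (g *m M, t).
Proof.
case=> dg _ [sm ht]; split => //=.
by rewrite /SL /= det_mulmx dg mul1r; exact: sm.
Qed.

End W3.

Section W4.
Variable R : realType.
Variable d : nat.

Lemma mulmx_bound m n k (g : 'M[R]_(m, n)) (A : 'M[R]_(n, k)) (del : R) i j :
  (forall a b, `|A a b| <= del) -> `|(g *m A) i j| <= (\sum_l `|g i l|) * del.
Proof.
move=> hA; rewrite mxE mulr_suml; apply: le_trans (ler_norm_sum _ _ _) _.
by apply: ler_sum => l _; rewrite normrM; apply: ler_wpM2l.
Qed.

Lemma ball_prodP (p q : 'M[R]_d.+1 * R) r :
  ball p r q <-> 0 < r /\ (forall i j, `|p.1 i j - q.1 i j| < r) /\ `|p.2 - q.2| < r.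
Proof.
case: p q => M t [M' t']; split.
  by case=> /= [[r0 H] H2]; split => //; split.
by case=> r0 [H1 H2]; split => //; split.
Qed.

Lemma ball_in_ball (p z : 'M[R]_d.+1 * R) r :
  ball p r z -> exists2 e, 0 < e & ball z e `<=` ball p r.
Proof.
case=> h1 h2.
have o1 := @ball_open _ _ p.1 r; have o2 := @ball_open _ _ p.2 r.
rewrite openE in o1; rewrite openE in o2.
have /nbhs_ballP [e1 e10 s1] := o1 _ h1.
have /nbhs_ballP [e2 e20 s2] := o2 _ h2.
exists (Num.min e1 e2); first by rewrite lt_min e10.
move=> y [y1 y2]; split.
  by apply: s1; apply: le_ball y1; rewrite ge_min lexx.
by apply: s2; apply: le_ball y2; rewrite ge_min lexx orbT.
Qed.

Definition Sat (p : 'M[R]_d.+1 * R) (r : R) : set ('M[R]_d.+1 * R) :=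
  [set q | X q /\ exists g, Gamma g /\ ball p r (g *m q.1, q.2)].

Lemma Sat_qopen p r : qopen (Sat p r).
Proof.
split.
  split; first by move=> q [].
  move=> h M t Gh [XM [g [Gg b]]]; split; first exact: X_Gamma.
  have [Gi _ e] := Gamma_inv Gh.
  exists (g *m invmx h); split; first exact: Gamma_mul.
  by rewrite /= mulmxA -(mulmxA g) e mulmx1.
exists [set q | exists g, Gamma g /\ ball p r (g *m q.1, q.2)]; split; last first.
  by apply/seteqP; split => q /=; [case=> a b; split|case=> a b; split].
rewrite openE => q [g [Gg b]].
have [e e0 se] := ball_in_ball b.
set S := \sum_i \sum_l `|g i l|.
have S0 : 0 <= S by apply: sumr_ge0 => i _; apply: sumr_ge0.
apply/nbhs_ballP; exists (e / (S + 1)).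
  by rewrite /= divr_gt0 // ltr_wpDl.
move=> [M' t'] /ball_prodP [r0 [h1 h2]]; exists g; split => //.
apply: se; apply/ball_prodP; split => //; split; last first.
  apply: lt_le_trans h2 _; rewrite ler_pdivrMr ?ltr_wpDl //.
  by rewrite ler_peMr ?(ltW e0) // lerDr.
move=> i j /=.
have -> : (g *m q.1) i j - (g *m M') i j = (g *m (q.1 - M')) i j.
  by rewrite mulmxBr !mxE.
have hb : forall a c, `|(q.1 - M') a c| <= e / (S + 1).
  by move=> a c; rewrite !mxE; apply: ltW; exact: h1.
apply: le_lt_trans (mulmx_bound g i j hb) _.
have Si : \sum_l `|g i l| <= S.
  rewrite /S [X in _ <= X](bigD1 i) //= lerDl.
  by apply: sumr_ge0 => k _; apply: sumr_ge0.
have Sp : 0 < S + 1 by rewrite ltr_wpDl.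
move: Si Sp e0; move: (\sum_l `|g i l|) => a Si Sp e0.
rewrite mulrA ltr_pdivrMr //; nra.
Qed.

Lemma Sat_center p r : X p -> 0 < r -> Sat p r p.
Proof.
move=> Xp r0; split => //; exists 1%:M; split; first exact: Gamma1.
by rewrite mul1mx; case: p {Xp} => M t; exact: ballxx.
Qed.

End W4.

Section W5.
Variable R : realType.
Variable d : nat.

Definition emb (u : R) (w : 'rV[R]_d) : 'rV[R]_d.+1 :=
  \row_j (if unlift ord0 j is Some j' then w 0 j' else u).

Lemma ucomp_emb u w : ucomp (emb u w) = u.
Proof. by rewrite /ucomp mxE unlift_none. Qed.

Lemma vcomp_emb u w : vcomp (emb u w) = w.
Proof. by apply/matrixP => i j; rewrite !mxE liftK (ord1 i). Qed.

Lemma vcompB (x y : 'rV[R]_d.+1) : vcomp (x - y) = vcomp x - vcomp y.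
Proof. by apply/matrixP => i j; rewrite !mxE. Qed.

Lemma ucompB (x y : 'rV[R]_d.+1) : ucomp (x - y) = ucomp x - ucomp y.
Proof. by rewrite /ucomp !mxE. Qed.

Lemma enorm_vcomp_bound (z : 'rV[R]_d.+1) S : (forall j, `|z 0 j| <= S) ->
  enorm (vcomp z) <= d%:R * S.
Proof.
move=> hz; apply: le_trans (enorm_le_s1 _) _.
rewrite /s1 (eq_bigr (fun j => `|z 0 (lift ord0 j)|)); last by move=> j _; rewrite mxE.
apply: le_trans (ler_sum _ (fun j _ => hz (lift ord0 j))) _.
by rewrite sumr_const card_ord mulr_natl.
Qed.

Definition matsum (M : 'M[R]_d.+1) : R := \sum_i \sum_l `|M i l|.

Lemma matsum_ge0 M : 0 <= matsum M.
Proof. by apply: sumr_ge0 => i _; apply: sumr_ge0. Qed.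

Definition rnd (M : 'M[R]_d.+1) (y : 'rV[R]_d.+1) : 'rV[R]_d.+1 :=
  \row_i ((Num.floor ((y *m invmx M) 0 i))%:~R).

Lemma rnd_int M y : intvec (rnd M y).
Proof. by move=> j; rewrite mxE intr_int. Qed.

Lemma rnd_bound M y : M \in unitmx -> forall j, `|(rnd M y *m M - y) 0 j| <= matsum M.
Proof.
move=> uM j.
set a := y *m invmx M.
have -> : rnd M y *m M - y = (rnd M y - a) *m M by rewrite mulmxBl /a mulmxKV.
rewrite mxE.
apply: le_trans (ler_norm_sum _ _ _) _.
have h1 : forall i, `|(rnd M y - a) 0 i| <= 1.
  move=> i.
  have -> : (rnd M y - a) 0 i = (Num.floor (a 0 i))%:~R - a 0 i by rewrite !mxE.
  have /andP[f1 f2] := floor_itv (a 0 i).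
  rewrite intrD (_ : 1%:~R = 1) // in f2.
  rewrite ler_norml; apply/andP; split; lra.
apply: le_trans (_ : \sum_i `|M i j| <= _).
  apply: ler_sum => i _; rewrite normrM.
  by rewrite -[X in _ <= X]mul1r; apply: ler_wpM2r.
apply: ler_sum => i _.
rewrite [X in _ <= X](bigD1 j) //= lerDl.
by apply: sumr_ge0.
Qed.

Lemma exists_point (M : 'M[R]_d.+1) (del c : R) (v0 : 'rV[R]_d) :
  M \in unitmx -> 0 < del -> 0 < c ->
  exists m, intvec m /\ exists l, 0 < l /\
    `|ucomp (m *m M)| < del /\ enorm (vcomp (m *m M) - l *: v0) < l * c.
Proof.
move=> uM del0 c0.
set S := matsum M.
have S0 : 0 <= S := matsum_ge0 M.
set w := del / 2.
have w0 : 0 < w by rewrite divr_gt0.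
set A := (2 * d%:R * S + 1) / c.
have A0 : 0 < A by rewrite divr_gt0 // ltr_wpDl // !mulr_ge0 // ler0n.
set N := Num.trunc (2 * S / w).
have hN : 2 * S / w < N.+1%:R := truncnS_gt _.
pose y (k : 'I_N.+2) := emb 0 ((k%:R * A) *: v0).
pose z (k : 'I_N.+2) := rnd M (y k) *m M.
pose u (k : 'I_N.+2) := ucomp (z k).
have zb : forall k j, `|(z k - y k) 0 j| <= S by move=> k j; exact: rnd_bound.
have ub : forall k, `|u k| <= S.
  move=> k; have := zb k ord0.
  by rewrite -[(z k - y k) 0 ord0]/(ucomp (z k - y k)) ucompB /y ucomp_emb subr0.
have pair : forall j k : 'I_N.+2, (j < k)%N -> `|u k - u j| < w ->
    exists m, intvec m /\ exists l, 0 < l /\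
    `|ucomp (m *m M)| < del /\ enorm (vcomp (m *m M) - l *: v0) < l * c.
  move=> j k jk ujk.
  exists (rnd M (y k) - rnd M (y j)); split.
    move=> i; rewrite !mxE; apply: rpredB; exact: intr_int.
  have kj : (j%:R : R) < k%:R by rewrite ltr_nat.
  exists ((k%:R - j%:R) * A); split; first by rewrite mulr_gt0 // subr_gt0.
  rewrite mulmxBl -/(z k) -/(z j); split.
    rewrite ucompB -/(u k) -/(u j); apply: lt_trans ujk _.
    by rewrite /w ltr_pdivrMr // ltr_pMr // ltr1n.
  have -> : vcomp (z k - z j) - ((k%:R - j%:R) * A) *: v0 =
      vcomp (z k - y k) - vcomp (z j - y j).
    apply/matrixP => a b; rewrite !mxE !liftK !mxE (ord1 a); ring.
  apply: le_lt_trans (enormB _ _) _.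
  have b1 := enorm_vcomp_bound (zb k); have b2 := enorm_vcomp_bound (zb j).
  have h1 : 1 <= k%:R - j%:R :> R.
    rewrite lerBrDr; have : (j.+1%:R : R) <= k%:R by rewrite ler_nat.
    by rewrite -addn1 natrD addrC.
  have h2 : A * c = 2 * d%:R * S + 1 by rewrite /A mulfVK ?gt_eqF.
  have h3 : 0 <= d%:R * S :> R by rewrite mulr_ge0 ?ler0n.
  have h4 : A <= (k%:R - j%:R) * A by rewrite ler_peMl // ltW.
  have h5 : A * c <= (k%:R - j%:R) * A * c by rewrite ler_pM2r.
  lra.
pose f (k : 'I_N.+2) : 'I_N.+1 := inord (absz (Num.floor ((u k + S) / w))).
have fb : forall k, 0 <= Num.floor ((u k + S) / w) /\ (absz (Num.floor ((u k + S) / w)) < N.+1)%N.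
  move=> k.
  have x0 : 0 <= (u k + S) / w.
    by rewrite divr_ge0 ?(ltW w0) //; have := ub k; rewrite ler_norml => /andP[]; lra.
  have xN : (u k + S) / w < N.+1%:R.
    apply: le_lt_trans hN; rewrite ler_pM2r ?invr_gt0 //.
    by have := ub k; rewrite ler_norml => /andP[]; lra.
  split; first by rewrite floor_ge0.
  have := xN; rewrite -(floor_lt_int _ (N.+1)%:Z) => h.
  rewrite -ltz_nat abszE ger0_norm //; by rewrite floor_ge0.
have : ~~ injectiveb f.
  apply/negP => /injectiveP inj; have := leq_card f inj; rewrite !card_ord ltnn //.
move/injectivePn => [j [k jk fjk]].
have ejk : Num.floor ((u j + S) / w) = Num.floor ((u k + S) / w).
  have := congr1 val fjk; rewrite /f /= !inordK; try by case: (fb j); case: (fb k).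
  move/(congr1 Posz); rewrite !abszE !ger0_norm //; by case: (fb j); case: (fb k).
have close : `|u k - u j| < w.
  have /andP[a1 a2] := floor_itv ((u j + S) / w).
  have /andP[b1 b2] := floor_itv ((u k + S) / w).
  rewrite ejk in a1 a2.
  rewrite intrD (_ : 1%:~R = 1) // in a2 b2.
  have : `|(u k + S) / w - (u j + S) / w| < 1.
    rewrite ltr_norml; apply/andP; split; lra.
  have -> : (u k + S) / w - (u j + S) / w = (u k - u j) / w by field; rewrite gt_eqF.
  by rewrite normrM [`|w^-1|]gtr0_norm ?invr_gt0 // ltr_pdivrMr // mul1r.
case: (ltngtP j k) => [lt|gt|eq].
- exact: pair lt close.
- by apply: (pair k j gt); rewrite distrC.
- by move: jk; rewrite (val_inj eq) eqxx.
Qed.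
End W5.

Section W6.
Variable R : realType.
Variable d : nat.
Variable D : set 'rV[R]_d.

Lemma FD_le (M : 'M[R]_d.+1) t x : QD D M t x -> FD D (M, t) <= enorm (vcomp x).
Proof.
move=> hx; have hl : has_lbound [set enorm (vcomp y) | y in QD D M t].
  by exists 0 => _ [y _ <-]; exact: enorm_ge0.
by apply: (ge_inf hl); exists x.
Qed.

Lemma shift_bound (m : 'rV[R]_d.+1) (M M' : 'M[R]_d.+1) r :
  (forall i j, `|M i j - M' i j| < r) -> forall j, `|(m *m M' - m *m M) 0 j| <= s1 m * r.
Proof.
move=> h j; rewrite -mulmxBr.
have hb : forall a b, `|(M' - M) a b| <= r.
  by move=> a b; rewrite !mxE distrC; apply: ltW.
have := mulmx_bound m 0 j hb.
by rewrite /s1.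
Qed.

Lemma unit_of_X (p : 'M[R]_d.+1 * R) : X p -> p.1 \in unitmx.
Proof. by case=> h _; rewrite unitmxE h unitr1. Qed.

Variable HD : D `<=` @sphere R d.
Variable v0 : 'rV[R]_d.
Variable e0 : R.
Variable Dv0 : D v0.
Variable e00 : 0 < e0.
Variable Hint : forall w, sphere w -> enorm (w - v0) < e0 -> D w.

Lemma upper_local (p : 'M[R]_d.+1 * R) : X p ->
  exists r, 0 < r /\ exists K, forall q, ball p r q -> FD D q < K.
Proof.
move=> Xp; have uM := unit_of_X Xp.
case: p Xp uM => M t [_ /andP [t0 t1]] /= uM.
have ev0 : enorm v0 = 1 := HD Dv0.
set c := Num.min e0 1 / 2.
have c0 : 0 < c by rewrite divr_gt0 // lt_min e00 ltr01.
set del := Num.min t (1 - t).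
have del0 : 0 < del by rewrite lt_min t0 subr_gt0 t1.
have [m [im [l [l0 [hu hv]]]]] := exists_point v0 uM del0 c0.
set x := m *m M in hu hv.
set sg := s1 m.
have sg0 : 0 <= sg := s1_ge0 m.
set h1 := del - `|ucomp x|.
set h2 := l * c - enorm (vcomp x - l *: v0).
have h10 : 0 < h1 by rewrite subr_gt0.
have h20 : 0 < h2 by rewrite subr_gt0.
set B := 2 * (d%:R + 1) * (sg + 1).
have B0 : 0 < B by rewrite !mulr_gt0 // ltr_wpDl // ler0n.
set r := Num.min h1 h2 / B.
have r0 : 0 < r by rewrite divr_gt0 // lt_min h10.
have rB : r * B = Num.min h1 h2 by rewrite /r mulfVK // gt_eqF.
have m1 : Num.min h1 h2 <= h1 by rewrite ge_min lexx.
have m2 : Num.min h1 h2 <= h2 by rewrite ge_min lexx orbT.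
exists r; split => //; exists (l * c + l + 1).
move=> [M' t'] /ball_prodP [_ [hM ht]] /=.
set x' := m *m M'.
have hb := shift_bound m hM.
have ub : `|ucomp x' - ucomp x| <= sg * r by rewrite -ucompB; exact: hb.
have vb : enorm (vcomp x' - vcomp x) <= d%:R * (sg * r).
  by rewrite -vcompB; apply: enorm_vcomp_bound.
have dp : 0 <= d%:R :> R := ler0n R d.
have aE : (d%:R + 1) * (sg + 1) * r * 2 = Num.min h1 h2.
  by rewrite -rB /B; ring.
have d1 : 0 < d%:R + 1 :> R by lra.
have sg1 : 0 < sg + 1 by lra.
have a0 : 0 < (d%:R + 1) * (sg + 1) * r by apply: mulr_gt0 => //; apply: mulr_gt0.
have e1 : (sg + 1) * r < h1.
  have sr : 0 <= (sg + 1) * r by rewrite mulr_ge0 // ltW.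
  have : (sg + 1) * r <= (d%:R + 1) * ((sg + 1) * r).
    by rewrite ler_peMl //; lra.
  rewrite mulrA; lra.
have e2 : d%:R * (sg * r) < h2.
  have : d%:R * (sg * r) <= (d%:R + 1) * (sg + 1) * r.
    rewrite mulrA; apply: ler_wpM2r; first exact: ltW.
    by apply: ler_pM => //; lra.
  lra.
have hv' : enorm (vcomp x' - l *: v0) < l * c.
  have -> : vcomp x' - l *: v0 = (vcomp x' - vcomp x) + (vcomp x - l *: v0).
    by rewrite addrA subrK.
  apply: le_lt_trans (enormD _ _) _; rewrite /h2 in e2; lra.
have Qx' : QD D M' t' x'.
  split; first by exists m.
  split; last exact: (direction ev0 e00 Hint l0 hv').
  have : del <= t by rewrite ge_min lexx.
  have : del <= 1 - t by rewrite ge_min lexx orbT.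
  have /andP[n1 n2] : - `|ucomp x| <= ucomp x <= `|ucomp x| by rewrite -ler_norml.
  move: ub; rewrite ler_norml => /andP[b1 b2].
  move: ht; rewrite ltr_norml => /andP[c1 c2].
  have : (sg + 1) * r = sg * r + r by ring.
  rewrite /h1 in e1.
  move=> *; simpl in c1, c2; apply/andP; split; lra.
apply: le_lt_trans (FD_le Qx') _.
have : enorm (vcomp x') <= l * c + l.
  have -> : vcomp x' = (vcomp x' - l *: v0) + l *: v0 by rewrite subrK.
  apply: le_trans (enormD _ _) _; rewrite enormZ ev0 mulr1 gtr0_norm //.
  by apply: lerD => //; apply: ltW.
lra.
Qed.
End W6.

Section W7.
Variable R : realType.
Variable d : nat.
Variable D : set 'rV[R]_d.
Variable HD : D `<=` @sphere R d.
Variable v0 : 'rV[R]_d.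
Variable e0 : R.
Variable Dv0 : D v0.
Variable e00 : 0 < e0.
Variable Hint : forall w, sphere w -> enorm (w - v0) < e0 -> D w.

Lemma part_i (C : set ('M[R]_d.+1 * R)) : qcompact C ->
  exists2 kappa : R, 0 < kappa & forall p, C p -> FD D p < kappa.
Proof.
pose I := {p : 'M[R]_d.+1 * R | X p}.
have loc : forall i : I, {rK : R * R | 0 < rK.1 /\ forall q, ball (sval i) rK.1 q -> FD D q < rK.2}.
  move=> [p Xp]; apply: cid.
  have [r [r0 [K hK]]] := upper_local HD Dv0 e00 Hint Xp.
  by exists (r, K).
pose U (i : I) := Sat (sval i) (sval (loc i)).1.
case=> [[CX Cinv] cov].
have [|n [f sub]] := cov I U (fun i => Sat_qopen _ _).
  move=> p Cp; exists (exist _ p (CX p Cp)) => //.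
  apply: Sat_center; first exact: (CX p Cp).
  by case: (svalP (loc (exist _ p (CX p Cp)))).
exists (1 + \sum_(k < n) `|(sval (loc (f k))).2|).
  by apply: ltr_pwDl => //; apply: sumr_ge0.
move=> [M t] Cp; have [k _ [Xp [g [Gg b]]]] := sub _ Cp.
have := (svalP (loc (f k))).2 _ b.
rewrite /= FD_Gamma // => h.
apply: lt_le_trans h _.
apply: le_trans (ler_norm _) _.
rewrite [X in _ <= X]addrC (bigD1 k) //= -addrA lerDl.
by apply: addr_ge0 => //; apply: sumr_ge0.
Qed.
End W7.

Section W8.
Variable R : realType.
Variable d : nat.

Lemma fin_pos_min (T : finType) (g : T -> R) : (forall k, 0 < g k) ->
  exists2 r, 0 < r & forall k, r <= g k.
Proof.
move=> hg.
have S0 : 0 <= \sum_k (g k)^-1 by apply: sumr_ge0 => k _; rewrite invr_ge0 ltW.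
exists (1 + \sum_k (g k)^-1)^-1; first by rewrite invr_gt0 ltr_pwDl.
move=> k; rewrite -[g k]invrK lef_pV2 ?posrE ?invr_gt0 ?ltr_pwDl //.
rewrite (bigD1 k) //= addrCA lerDl.
by rewrite addr_ge0 //; apply: sumr_ge0 => i _; rewrite invr_ge0 ltW.
Qed.

Lemma int_coord_bound (m : 'rV[R]_d.+1) i : `|m 0 i| <= s1 m.
Proof.
rewrite /s1 (bigD1 i) //= lerDl; by apply: sumr_ge0.
Qed.

Lemma fin_enum (N : nat) (Q : 'rV[R]_d.+1 -> R -> Prop) :
  (forall m r r', Q m r -> 0 < r' -> r' <= r -> Q m r') ->
  (forall m, intvec m -> s1 m <= N%:R -> exists2 r, 0 < r & Q m r) ->
  exists2 r, 0 < r & forall m, intvec m -> s1 m <= N%:R -> Q m r.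
Proof.
move=> mono hQ.
pose T := {ffun 'I_d.+1 -> 'I_(N + N).+1}.
pose em (k : T) : 'rV[R]_d.+1 := \row_i ((k i : nat)%:R - N%:R).
have ex : forall k : T, exists r, 0 < r /\
    (intvec (em k) -> s1 (em k) <= N%:R -> Q (em k) r).
  move=> k.
  have [hi|hi] := pselect (intvec (em k) /\ s1 (em k) <= N%:R).
    by have [r r0 Qr] := hQ _ hi.1 hi.2; exists r; split.
  by exists 1; split => // a b; case: hi.
have [rf hrf] := choice ex.
have [r r0 hr] := fin_pos_min (fun k => (hrf k).1).
exists r => // m im sm.
have cov : exists k : T, em k = m.
  have hz : forall i, exists z : int, m 0 i = z%:~R /\ (- N%:Z <= z <= N%:Z)%R.
    move=> i; set z := Num.floor (m 0 i); exists z.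
    have e : m 0 i = z%:~R by rewrite /z floorK //; exact: im.
    split => //.
    have := le_trans (int_coord_bound m i) sm; rewrite ler_norml e.
    move=> /andP[h1 h2]; apply/andP; split; rewrite -(ler_int R).
      by rewrite mulrNz.
    by [].
  have [zf hzf] := choice hz.
  exists [ffun i => inord (absz (zf i + N%:Z))].
  apply/matrixP => a i; rewrite (ord1 a) !mxE ffunE.
  have [e /andP[z1 z2]] := hzf i.
  have p0 : (0 <= zf i + N%:Z)%R by rewrite -lerBlDr sub0r.
  rewrite inordK; last first.
    rewrite -ltz_nat abszE ger0_norm //; lia.
  by rewrite natr_absz ger0_norm // intrD e addrK.
have [k ek] := cov.
have [_ hk] := hrf k.
rewrite -ek in im sm *.
exact: mono (hk im sm) r0 (hr k).
Qed.
End W8.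

Section W9.
Variable R : realType.
Variable d : nat.

Lemma rowball n (x z : 'rV[R]_n) r : 0 < r -> (forall j, `|x 0 j - z 0 j| < r) -> ball x r z.
Proof. by move=> r0 h; split => // i j; rewrite (ord1 i); exact: h. Qed.

Lemma emb_entry (u : R) j : `|(emb u (0 : 'rV[R]_d)) 0 j| <= `|u|.
Proof. by rewrite mxE; case: (unlift ord0 j) => [a|] //; rewrite mxE normr0. Qed.

Lemma vcomp0 : vcomp (0 : 'rV[R]_d.+1) = 0.
Proof. by apply/matrixP => i j; rewrite !mxE. Qed.

Lemma vcompD (x y : 'rV[R]_d.+1) : vcomp (x + y) = vcomp x + vcomp y.
Proof. by apply/matrixP => i j; rewrite !mxE. Qed.

Lemma ucompD (x y : 'rV[R]_d.+1) : ucomp (x + y) = ucomp x + ucomp y.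
Proof. by rewrite /ucomp !mxE. Qed.

Lemma shift_u (x : 'rV[R]_d.+1) s : ucomp (x + emb s 0) = ucomp x + s.
Proof. by rewrite ucompD ucomp_emb. Qed.

Lemma shift_v (x : 'rV[R]_d.+1) s : vcomp (x + emb s 0) = vcomp x.
Proof. by rewrite vcompD vcomp_emb addr0. Qed.

Lemma shift_entry (x y : 'rV[R]_d.+1) s j :
  `|x 0 j - (y + emb s 0) 0 j| <= `|x 0 j - y 0 j| + `|s|.
Proof.
rewrite [(y + _) 0 j]mxE opprD addrA.
apply: le_trans (ler_normD _ _) _; rewrite normrN; apply: lerD => //.
exact: emb_entry.
Qed.

Lemma not_boundary_in (A : set 'rV[R]_d.+1) x : ~ boundary A x -> A x ->
  exists2 r, 0 < r & ball x r `<=` A.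
Proof.
move=> nb Ax.
have : interior A x.
  apply: contrapT => ni; apply: nb; split => //; exact: subset_closure.
by move/nbhs_ballP.
Qed.

Lemma not_boundary_cases (A : set 'rV[R]_d.+1) x : ~ boundary A x ->
  (exists2 r, 0 < r & ball x r `<=` A) \/ (exists2 r, 0 < r & forall z, ball x r z -> ~ A z).
Proof.
move=> nb.
have [ix|nix] := pselect (interior A x).
  by left; move/nbhs_ballP: ix.
right.
have ncl : ~ closure A x by move=> cx; apply: nb; split.
have : exists B, nbhs x B /\ ~ (A `&` B !=set0).
  apply: contrapT => h; apply: ncl => B nB.
  apply: contrapT => hB; apply: h; by exists B.
case=> B [/nbhs_ballP [r r0 sB] hAB]; exists r => // z bz Az.
by apply: hAB; exists z; split => //; apply: sB.
Qed.

Lemma coef_small (K T r : R) : 0 <= K -> 0 < T -> 0 < r -> r <= T / (K + 1) -> K * r < T.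
Proof.
move=> K0 T0 r0 h.
have K1 : 0 < K + 1 by lra.
have : (K + 1) * r <= T by rewrite mulrC -ler_pdivlMr.
nra.
Qed.

Lemma pos_min2 (a b : R) : 0 < a -> 0 < b -> exists r, [/\ 0 < r, r <= a & r <= b].
Proof.
move=> a0 b0; exists (Num.min a b); split; first by rewrite lt_min a0.
  by rewrite ge_min lexx.
by rewrite ge_min lexx orbT.
Qed.

Lemma s1D n (x y : 'rV[R]_n) : s1 (x + y) <= s1 x + s1 y.
Proof.
rewrite /s1 -big_split /=; apply: ler_sum => j _; rewrite mxE; exact: ler_normD.
Qed.

Lemma s1_bound n (x : 'rV[R]_n) B : (forall j, `|x 0 j| <= B) -> s1 x <= n%:R * B.
Proof.
move=> h; apply: le_trans (ler_sum _ (fun j _ => h j)) _.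
by rewrite sumr_const card_ord mulr_natl.
Qed.

Lemma mul_unit_eq0 (m : 'rV[R]_d.+1) (M : 'M[R]_d.+1) : M \in unitmx -> m *m M = 0 -> m = 0.
Proof. by move=> uM h; rewrite -(mulmxK uM m) h mul0mx. Qed.

End W9.

Section W9b.
Variable R : realType.
Lemma choose_r (sm eta rho rho' e K6 Nn dd : R) :
  0 <= sm -> 0 < eta -> 0 < rho -> 0 < rho' -> 0 < e -> 0 <= K6 -> 0 <= Nn -> 0 <= dd ->
  exists r, [/\ 0 < r, (sm + 1) * r < rho, (dd * sm) * r < eta, r <= 1 / 2 &
     [/\ (Nn + 1) * r < rho', (dd * Nn) * r < e / 2 & K6 * r < 1 / 2]].
Proof.
move=> sm0 eta0 rho0 rho'0 e0 K60 Np dp.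
have q1 : 0 < (sm + 1) + 1 by lra.
have q2 : 0 < dd * sm + 1 by have := mulr_ge0 dp sm0; lra.
have q3 : 0 < 1 / 2 :> R by lra.
have q4 : 0 < (Nn + 1) + 1 :> R by lra.
have q5 : 0 < e / 2 by lra.
have q6 : 0 < dd * Nn + 1 :> R by have := mulr_ge0 dp Np; lra.
have q7 : 0 < K6 + 1 by lra.
have [r [r0 ra1 ra2]] := pos_min2 (divr_gt0 rho0 q1) (divr_gt0 eta0 q2).
have [r2 [r20 rb1 rb2]] := pos_min2 r0 q3.
have [r3 [r30 rc1 rc2]] := pos_min2 r20 (divr_gt0 rho'0 q4).
have [r4 [r40 rd1 rd2]] := pos_min2 r30 (divr_gt0 q5 q6).
have [r5 [r50 re1 re2]] := pos_min2 r40 (divr_gt0 q3 q7).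
exists r5; split => //.
- apply: coef_small; [lra|done|done|lra].
- apply: coef_small; [exact: mulr_ge0|done|done|lra].
- lra.
split.
- apply: coef_small; [lra|done|done|lra].
- apply: coef_small; [exact: mulr_ge0 | lra |done|lra].
- apply: coef_small; [done| lra |done|lra].
Qed.
End W9b.

Section W10.
Variable R : realType.
Variable d : nat.
Variable D : set 'rV[R]_d.
Variable HD : D `<=` @sphere R d.
Variable v0 : 'rV[R]_d.
Variable e0 : R.
Variable Dv0 : D v0.
Variable e00 : 0 < e0.
Variable Hint : forall w, sphere w -> enorm (w - v0) < e0 -> D w.

Lemma QD_nonempty (M : 'M[R]_d.+1) t : X (M, t) -> exists x, QD D M t x.
Proof.
move=> Xp; have uM := unit_of_X Xp.
case: Xp => _ /andP [/= t0 t1].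
have ev0 : enorm v0 = 1 := HD Dv0.
set c := Num.min e0 1 / 2.
have c0 : 0 < c by rewrite divr_gt0 // lt_min e00 ltr01.
set del := Num.min t (1 - t).
have del0 : 0 < del by rewrite lt_min t0 subr_gt0 t1.
have [m [im [l [l0 [hu hv]]]]] := exists_point v0 uM del0 c0.
exists (m *m M); split; first by exists m.
split; last exact: (direction ev0 e00 Hint l0 hv).
have : del <= t by rewrite ge_min lexx.
have : del <= 1 - t by rewrite ge_min lexx orbT.
move: hu; rewrite ltr_norml => /andP[a1 a2] *; apply/andP; split; lra.
Qed.

End W10.

Lemma entryB (R : realType) n (A B : 'rV[R]_n) j : (A - B) 0 j = A 0 j - B 0 j.
Proof. by rewrite !mxE. Qed.

Lemma shift_range (R : realType) (a t t' : R) : - t' < a < 1 - t' -> - t < a + (t' - t) < 1 - t.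
Proof. by move=> /andP[u1 u2]; apply/andP; split; lra. Qed.

Section W11.
Variable R : realType.
Variable d : nat.
Variable D : set 'rV[R]_d.
Variable HD : D `<=` @sphere R d.
Variable v0 : 'rV[R]_d.
Variable e0 : R.
Variable Dv0 : D v0.
Variable e00 : 0 < e0.
Variable Hint : forall w, sphere w -> enorm (w - v0) < e0 -> D w.

Lemma cont_local (kappa : R) (M : 'M[R]_d.+1) t : X (M, t) -> FD D (M, t) < kappa ->
  (forall x, lattice M x -> x != 0 -> ~ boundary (slab kappa t D) x) ->
  forall e, 0 < e -> exists2 r, 0 < r & forall q, ball (M, t) r q -> `|FD D q - FD D (M, t)| < e.
Proof.
move=> Xp fk Hb e e0p.
have uM := unit_of_X Xp.
have [_ /andP [/= t0 t1]] := Xp.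
set f := FD D (M, t) in fk *.
have [x0 Qx0] := QD_nonempty HD Dv0 e00 Hint Xp.
have Sne : [set enorm (vcomp y) | y in QD D M t] !=set0.
  by exists (enorm (vcomp x0)); exists x0.
set e1 := Num.min e (kappa - f) / 2.
have e10 : 0 < e1 by rewrite divr_gt0 // lt_min e0p subr_gt0.
have e1e : e1 <= e / 2 by rewrite ler_pM2r // ge_min lexx.
have e1k : e1 <= (kappa - f) / 2 by rewrite ler_pM2r // ge_min lexx orbT.
have fl : f < f + e1 by lra.
have [a [x Qx ax] hx] := inf_lt Sne fl.
rewrite -ax in hx; clear a ax.
have Qx' := Qx; case: Qx' => [[m im xE] [ux cx]].
have [vx0 _] := cone_dec HD cx.
have x0' : x != 0 by apply: contra vx0 => /eqP ->; rewrite vcomp0.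
have sx : slab kappa t D x.
  split => //; apply: cone_trunc => //; lra.
have [rho rho0 brho] := not_boundary_in (Hb x (ex_intro2 _ _ m im xE) x0') sx.
set eta := f + e - enorm (vcomp x).
have eta0 : 0 < eta by rewrite /eta; lra.
set P := invmx M.
set piP := matsum P.
have piP0 : 0 <= piP := matsum_ge0 P.
set nn : R := d.+1%:R.
have nn0 : 0 < nn by rewrite ltr0n.
set Bnd := 2 + kappa.
set K6 := nn * nn * piP.
have K60 : 0 <= K6 by rewrite !mulr_ge0 // ltW.
set Nr := 2 * K6 * (nn * Bnd).
set N := (Num.trunc Nr).+1.
have NrN : Nr <= N%:R by apply: ltW; exact: truncnS_gt.
pose Q (m' : 'rV[R]_d.+1) (r' : R) := m' != 0 ->
   (ball (m' *m M) r' `<=` slab kappa t D) \/ (forall z, ball (m' *m M) r' z -> ~ slab kappa t D z).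
have [rho' rho'0 hQ] : exists2 r', 0 < r' & forall m', intvec m' -> s1 m' <= N%:R -> Q m' r'.
  apply: fin_enum.
    move=> m' r1 r2 h r20 r21 nz; case: (h nz) => [h1|h1]; [left|right].
      by move=> z bz; apply: h1; apply: le_ball bz.
    by move=> z bz; apply: h1; apply: le_ball bz.
  move=> m' im' _.
  have [z0|nz] := eqVneq m' 0.
    by exists 1 => //; rewrite /Q z0 eqxx.
  have nz' : m' *m M != 0 by apply: contra nz => /eqP h; apply/eqP; exact: mul_unit_eq0 uM h.
  case: (not_boundary_cases (Hb _ (ex_intro2 _ _ m' im' erefl) nz')) => [[r' r'0 h]|[r' r'0 h]].
    by exists r' => // _; left.
  by exists r' => // _; right.
set sm := s1 m.
have sm0 : 0 <= sm := s1_ge0 m.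
have dp : 0 <= d%:R :> R := ler0n R d.
have Np : 0 <= N%:R :> R := ler0n R N.
have [r5 [r50 C1 C2 C3 [C4 C5 C6]]] := choose_r sm0 eta0 rho0 rho'0 e0p K60 Np dp.
exists r5 => // [[M' t']] /ball_prodP [_ [hM ht]] /=.
have hM0 : forall i j, `|M i j - M' i j| < r5 := hM.
have hM1 : forall i j, `|M' i j - M i j| < r5 by move=> i j; rewrite distrC.
have ht0 : `|t' - t| < r5 by rewrite distrC.
have f0 : 0 <= f.
  rewrite /f /FD /=; apply: (lb_le_inf Sne) => _ [y _ <-]; exact: enorm_ge0.
set x' := m *m M'.
have hx' : forall j, `|x 0 j - x' 0 j| <= sm * r5.
  move=> j; rewrite distrC -xE -entryB; have := shift_bound m hM0 j; rewrite -/sm; exact.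
set z := x' + emb (t' - t) 0.
have bz : ball x rho z.
  apply: rowball => // j; apply: le_lt_trans (shift_entry _ _ _ _) _.
  have := hx' j; move: C1 ht0; clear -r50; move=> C1 ht0 h; lra.
have [uz tz] := brho _ bz.
rewrite shift_u in uz; rewrite shift_v in tz.
have Qx'' : QD D M' t' x'.
  split; first by exists m.
  split; last exact: trunc_cone_cone tz.
  by move: uz => /andP[u1 u2]; apply/andP; split; clear -u1 u2; lra.
have up : FD D (M', t') < f + e.
  apply: le_lt_trans (FD_le Qx'') _.
  have h1 : enorm (vcomp x' - vcomp x) <= d%:R * (sm * r5).
    rewrite -vcompB; apply: enorm_vcomp_bound => j.
    by rewrite entryB distrC.
  have h2 : enorm (vcomp x') <= enorm (vcomp x) + enorm (vcomp x' - vcomp x).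
    by have := enormD (vcomp x) (vcomp x' - vcomp x); rewrite addrC subrK.
  rewrite mulrA in h1; rewrite /eta in C2; clear -h1 h2 C2; lra.
have Sq : [set enorm (vcomp y) | y in QD D M' t'] !=set0.
  by exists (enorm (vcomp x')); exists x'.
have low : f - e / 2 <= FD D (M', t').
  rewrite /FD /=; apply: (lb_le_inf Sq) => _ [y Qy <-].
  rewrite leNgt; apply/negP => hy.
  case: Qy => [[m' im' yE] [uy cy]].
  have [vy0 _] := cone_dec HD cy.
  have nz : m' != 0.
    apply: contra vy0 => /eqP m0; apply/eqP.
    by rewrite -yE m0 mul0mx vcomp0.
  have yk : enorm (vcomp y) < kappa by clear -hy fk e0p; lra.
  have yb : forall j, `|y 0 j| <= Bnd.
    move=> j; case: (unliftP ord0 j) => [j'|] ->.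
      have := coord_le_enorm (vcomp y) j'; rewrite mxE.
      by move: yk; rewrite /Bnd; clear -fk f0; move=> yk h; lra.
    move: uy => /andP[u1 u2]; rewrite /ucomp in u1 u2.
    move: ht0 C3 t0 t1 fk f0; rewrite /Bnd; clear -u1 u2.
    move=> ht0 C3 t0 t1 fk f0; rewrite ler_norml; move: ht0; rewrite ltr_norml => /andP[a1 a2].
    apply/andP; split; lra.
  set sg := s1 m'.
  have sg0 : 0 <= sg := s1_ge0 m'.
  have sy : s1 y <= nn * Bnd := s1_bound yb.
  have sdiff : s1 (m' *m M - y) <= nn * (sg * r5).
    apply: s1_bound => j; rewrite -yE; have := shift_bound m' hM1 j; rewrite -/sg; exact.
  have smM : s1 (m' *m M) <= s1 y + s1 (m' *m M - y).
    by have := s1D y (m' *m M - y); rewrite addrC subrK.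
  have Pb : forall a b, `|P a b| <= piP.
    move=> a b; rewrite /piP /matsum (bigD1 a) //= (bigD1 b) //= -addrA lerDl.
    by apply: addr_ge0; apply: sumr_ge0 => *; [|apply: sumr_ge0].
  have mb : forall i, `|m' 0 i| <= s1 (m' *m M) * piP.
    move=> i; rewrite -{1}(mulmxK uM m') -/P.
    exact: mulmx_bound.
  have sgb : sg <= nn * (s1 (m' *m M) * piP) := s1_bound mb.
  have sgN : sg <= N%:R.
    apply: le_trans NrN.
    have h1 : sg <= K6 * Bnd + (K6 * r5) * sg.
      have h3 : nn * (s1 (m' *m M) * piP) <= nn * ((nn * Bnd + nn * (sg * r5)) * piP).
        apply: ler_wpM2l; first exact: ltW.
        apply: ler_wpM2r => //; clear -smM sy sdiff; lra.
      have -> : K6 * Bnd + (K6 * r5) * sg = nn * ((nn * Bnd + nn * (sg * r5)) * piP).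
        by rewrite /K6; ring.
      exact: le_trans sgb h3.
    have h2 : (K6 * r5) * sg <= (1 / 2) * sg by apply: ler_wpM2r => //; exact: ltW.
    have h4 : K6 * Bnd <= K6 * (nn * Bnd).
      apply: ler_wpM2l => //; rewrite ler_peMl //; last by rewrite /nn ler1n.
      rewrite /Bnd; clear -fk f0; lra.
    rewrite /Nr; clear -h1 h2 h4; lra.
  have hmy : forall j, `|(m' *m M) 0 j - y 0 j| <= N%:R * r5.
    move=> j; rewrite -entryB -yE.
    have := shift_bound m' hM1 j; rewrite -/sg => h.
    apply: le_trans h _; apply: ler_wpM2r => //; exact: ltW.
  set z' := y + emb (t' - t) 0.
  have bz' : ball (m' *m M) rho' z'.
    apply: rowball => // j; apply: le_lt_trans (shift_entry _ _ _ _) _.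
    have := hmy j; move: C4 ht0; clear -r50; move=> C4 ht0 h; lra.
  have sz' : slab kappa t D z'.
    split; first by rewrite /z' shift_u; exact: shift_range.
    rewrite shift_v; apply: cone_trunc => //; exact: ltW.
  case: (hQ m' im' sgN nz) => [hin|hout]; last exact: (hout z' bz').
  have [um vm] := hin _ (ballxx _ rho'0).
  have Qm : QD D M t (m' *m M).
    split; first by exists m'.
    by split => //; exact: trunc_cone_cone vm.
  have fm := FD_le Qm.
  have h1 : enorm (vcomp (m' *m M) - vcomp y) <= d%:R * (N%:R * r5).
    by rewrite -vcompB; apply: enorm_vcomp_bound => j; rewrite entryB.
  have h2 : enorm (vcomp (m' *m M)) <= enorm (vcomp y) + enorm (vcomp (m' *m M) - vcomp y).
    by have := enormD (vcomp y) (vcomp (m' *m M) - vcomp y); rewrite addrC subrK.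
  rewrite mulrA in h1; rewrite -/f in fm.
  by clear -fm h1 h2 C5 hy; lra.
rewrite ltr_norml; apply/andP; split; clear -low up e0p; lra.
Qed.
End W11.

Unset Implicit Arguments.

Theorem proposition7p1 (R : realType) (d : nat) (D : set 'rV[R]_d)
    (C : set ('M[R]_(d.+1) * R)) :
  (2 <= d)%N ->
  D `<=` @sphere R d ->
  nonempty_sphere_interior D ->
  qcompact C ->
  exists2 kappa : R, 0 < kappa &
    (forall p, C p -> FD D p < kappa) /\
    (forall p, C p ->
       (forall x, lattice p.1 x -> x != 0 ->
          ~ boundary (slab kappa p.2 D) x) ->
       qcontinuous_at (FD D) p).
Proof.
move=> _ HD [v0 [Dv0 [e0 e00 Hint]]] qC.
have [kappa k0 hk] := part_i HD Dv0 e00 Hint qC.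
exists kappa => //; split => // p Cp Hb e e0p.
have [[CX _] _] := qC.
have Xp := CX p Cp.
move: Cp Xp Hb; case: p => M t Cp Xp Hb.
have [r r0 hr] := cont_local HD Dv0 e00 Hint Xp (hk _ Cp) Hb e0p.
exists (Sat (M, t) r); split; first exact: Sat_qopen.
split; first exact: Sat_center.
move=> [M' t'] [Xq [g [Gg b]]].
by have := hr _ b; rewrite FD_Gamma.
Qed.
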